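(* Let $G$ be a connected Lie group with Lie algebra $\mathfrak{g}$ (identified with the left-invariant vector fields on $G$). The left-invariant connections $\nabla$ on $G$ which are projectively flat are in bijective correspondence with pairs $(\Psi,f)$ consisting of any Lie-algebra homomorphism $\Psi:\mathfrak{g}\to\mathfrak{sl}(\mathfrak{g})$ and any linear functional $f\in\mathfrak{g}^*$; the correspondence is given by $\nabla_uv=(\Psi u)v+f(u)v$ for $u,v\in\mathfrak{g}$. Moreover, the Ricci tensor $\rho$ of such $\nabla$ is given by $\rho(u,v)=f([u,v])$ for $u,v\in\mathfrak{g}$.
   Context: $\mathfrak{sl}(\mathfrak{g})$ denotes the Lie algebra of traceless linear endomorphisms of $\mathfrak{g}$ with the commutator bracket. A connection on $G$ is a connection in $TG$, possibly with torsion. Curvature: $R(u,v)w=\nabla_v\nabla_u w-\nabla_u\nabla_v w+\nabla_{[u,v]}w$; Ricci tensor: $\rho(u,v)=\mathrm{tr}[w\mapsto R(u,w)v]$. The connection is projectively flat if $R(u,v)w=\sigma(u,v)w$ for some $2$-form $\sigma$ and all $u,v,w$. *)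

(* Defs.v *)
(* The Lie algebra g of an n-dimensional real Lie group is
   modelled as the column vectors 'cV[R]_n with a bracket; endomorphisms of g
   are n x n matrices acting by A *m v (so composition = matrix product). *)
From HB Require Import structures.
From mathcomp Require Import all_boot all_order all_algebra.
From mathcomp Require Import reals.
Set Implicit Arguments. Unset Strict Implicit. Unset Printing Implicit Defensive.
Import Order.TTheory GRing.Theory Num.Theory.
Local Open Scope ring_scope.

Section Defs.
Variables (R : realType) (n : nat).
Notation V := 'cV[R]_n.

Definition bilinear_map (B : V -> V -> V) : Prop :=
  (forall (a : R) (u u' v : V), B (a *: u + u') v = a *: B u v + B u' v) /\
  (forall (a : R) (u v v' : V), B u (a *: v + v') = a *: B u v + B u v').

Definition lie_bracket (br : V -> V -> V) : Prop :=
  [/\ bilinear_map br,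
      (forall u : V, br u u = 0) &
      (forall u v w : V, br u (br v w) + br v (br w u) + br w (br u v) = 0)].

Definition linear_map (Psi : V -> 'M[R]_n) : Prop :=
  forall (a : R) (u u' : V), Psi (a *: u + u') = a *: Psi u + Psi u'.

Definition lie_hom_sl (br : V -> V -> V) (Psi : V -> 'M[R]_n) : Prop :=
  [/\ linear_map Psi,
      (forall u : V, \tr (Psi u) = 0) &
      (forall u v : V, Psi (br u v) = Psi u *m Psi v - Psi v *m Psi u)].

Definition functional (f : 'rV[R]_n) (u : V) : R := (f *m u) 0 0.

(* curvature R(u,v)w = nabla_v nabla_u w - nabla_u nabla_v w + nabla_[u,v] w,
   nabla u v = nabla_u v for left-invariant fields u v *)
Definition curvature (br nab : V -> V -> V) (u v w : V) : V :=
  nab v (nab u w) - nab u (nab v w) + nab (br u v) w.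

Definition two_form (s : V -> V -> R) : Prop :=
  [/\ (forall (a : R) (u u' v : V), s (a *: u + u') v = a * s u v + s u' v),
      (forall (a : R) (u v v' : V), s u (a *: v + v') = a * s u v + s u v') &
      (forall u v : V, s u v = - s v u)].

Definition proj_flat (br nab : V -> V -> V) : Prop :=
  exists s : V -> V -> R, two_form s /\
    forall u v w : V, curvature br nab u v w = s u v *: w.

Definition lin_trace (F : V -> V) : R :=
  \tr (\matrix_(i < n, j < n) (F (delta_mx j 0)) i 0).

Definition ricci (br nab : V -> V -> V) (u v : V) : R :=
  lin_trace (fun w => curvature br nab u w v).

Definition conn_of (Psi : V -> 'M[R]_n) (f : 'rV[R]_n) (u v : V) : V :=
  Psi u *m v + functional f u *: v.

End Defs.

(* Main.v *)
Require Import Defs.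
From HB Require Import structures.
From mathcomp Require Import all_boot all_order all_algebra.
From mathcomp Require Import reals.
Import Order.TTheory GRing.Theory Num.Theory.
Local Open Scope ring_scope.

Set Implicit Arguments. Unset Strict Implicit.


Section H.
Variables (R : realType) (n : nat).
Notation V := 'cV[R]_n.

Lemma lin0 (W : lmodType R) (F : V -> W) :
  (forall a v v', F (a *: v + v') = a *: F v + F v') -> F 0 = 0.
Proof.
move=> HF; have := HF 1 0 0; rewrite scale1r addr0 scale1r.
by move/(congr1 (fun x => x - F 0)); rewrite addrK subrr.
Qed.
Lemma linD (W : lmodType R) (F : V -> W) :
  (forall a v v', F (a *: v + v') = a *: F v + F v') -> forall x y, F (x + y) = F x + F y.
Proof. by move=> HF x y; have := HF 1 x y; rewrite !scale1r. Qed.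
Lemma linZ (W : lmodType R) (F : V -> W) :
  (forall a v v', F (a *: v + v') = a *: F v + F v') -> forall a x, F (a *: x) = a *: F x.
Proof. by move=> HF a x; have := HF a x 0; rewrite addr0 (lin0 HF) addr0. Qed.

Lemma lin0R (F : V -> R) :
  (forall a v v', F (a *: v + v') = a * F v + F v') -> F 0 = 0.
Proof.
move=> HF; have := HF 1 0 0; rewrite scale1r addr0 mul1r.
by move/(congr1 (fun x => x - F 0)); rewrite addrK subrr.
Qed.
Lemma linDR (F : V -> R) :
  (forall a v v', F (a *: v + v') = a * F v + F v') -> forall x y, F (x + y) = F x + F y.
Proof. by move=> HF x y; have := HF 1 x y; rewrite scale1r mul1r. Qed.
Lemma linZR (F : V -> R) :
  (forall a v v', F (a *: v + v') = a * F v + F v') -> forall a x, F (a *: x) = a * F x.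
Proof. by move=> HF a x; have := HF a x 0; rewrite addr0 (lin0R HF) addr0. Qed.

Lemma col_decomp (v : V) : v = \sum_i v i 0 *: delta_mx i 0.
Proof.
rewrite {1}(matrix_sum_delta v); apply: eq_bigr => i _; by rewrite big_ord1.
Qed.

Lemma lin_sum (W : lmodType R) (F : V -> W) :
  (forall a v v', F (a *: v + v') = a *: F v + F v') ->
  forall v, F v = \sum_i v i 0 *: F (delta_mx i 0).
Proof.
move=> HF v; rewrite {1}(col_decomp v).
apply: (big_rec2 (fun a b => F a = b)); first exact: lin0 HF.
by move=> i y1 y2 _ <-; rewrite (linD HF) (linZ HF).
Qed.

Lemma lin_sumR (F : V -> R) :
  (forall a v v', F (a *: v + v') = a * F v + F v') ->
  forall v, F v = \sum_i v i 0 * F (delta_mx i 0).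
Proof.
move=> HF v; rewrite {1}(col_decomp v).
apply: (big_rec2 (fun a b => F a = b)); first exact: lin0R HF.
by move=> i y1 y2 _ <-; rewrite (linDR HF) (linZR HF).
Qed.

Definition matof (F : V -> V) : 'M[R]_n := \matrix_(i, j) (F (delta_mx j 0)) i 0.

Lemma matofE (F : V -> V) :
  (forall a v v', F (a *: v + v') = a *: F v + F v') ->
  forall w, matof F *m w = F w.
Proof.
move=> HF w; apply/matrixP=> i k; rewrite ord1 (lin_sum HF w) !mxE summxE.
by apply: eq_bigr => j _; rewrite !mxE mulrC.
Qed.

Lemma mx_ext (A B : 'M[R]_n) : (forall w : V, A *m w = B *m w) -> A = B.
Proof.
move=> H; apply/matrixP=> i j; have := congr1 (fun M : V => M i 0) (H (delta_mx j 0)).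
by rewrite -!colE !mxE.
Qed.
End H.


Lemma zaux (V : zmodType) (A A' B C D E : V) :
  A + B + (C + D) - (A' + C + (B + D)) + (A' - A + E) = E.
Proof.
have -> : A' + C + (B + D) = (B + (C + D)) + A'.
  by rewrite [RHS]addrC addrA -[A' + C + B]addrA (addrC C B) !addrA.
rewrite -(addrA A B) addrKA.
by rewrite addrA [A - A' + _]addrA subrK subrr add0r.
Qed.

Lemma functional_lin (R : realType) n (f : 'rV[R]_n) a x y :
  functional f (a *: x + y) = a * functional f x + functional f y.
Proof. by rewrite /functional mulmxDr -scalemxAr !mxE. Qed.

Lemma part1 (R : realType) (n : nat) (br : 'cV[R]_n -> 'cV[R]_n -> 'cV[R]_n) :
  lie_bracket br ->
  (forall (Psi : 'cV[R]_n -> 'M[R]_n) (f : 'rV[R]_n),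
     lie_hom_sl br Psi ->
     proj_flat br (conn_of Psi f) /\
     (forall u v : 'cV[R]_n, ricci br (conn_of Psi f) u v = functional f (br u v))).
Proof.
move=> [[brl brr] br0 _] Psi f [PsiL _ Psihom].
have anti : forall u v, br u v = - br v u.
  move=> u v; have := br0 (u + v).
  rewrite (linD (F := br^~ (u+v))) ?(linD (F := br u)) ?(linD (F := br v)) ?br0;
    try by move=> *; rewrite ?brl ?brr.
  by rewrite add0r addr0 => /eqP; rewrite addr_eq0 => /eqP.
set s := fun u v => functional f (br u v).
have curv : forall u v w, curvature br (conn_of Psi f) u v w = s u v *: w.
  move=> u v w; rewrite /curvature /conn_of Psihom.
  rewrite !mulmxDr !mulmxBl !mulmxA -!scalemxAr !scalerDr !scalerA (mulrC (functional f v)).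
  by rewrite zaux.
split.
  exists s; split => //; split.
  - by move=> a u u' v; rewrite /s brl functional_lin.
  - by move=> a u v v'; rewrite /s brr functional_lin.
  - move=> u v; rewrite /s anti.
    by rewrite /functional mulmxN mxE.
move=> u v; rewrite /ricci /lin_trace /mxtrace.
under eq_bigr => i _ do rewrite mxE curv.
rewrite -/(s u v) (@lin_sumR _ _ (s u)); last by move=> a x y; rewrite /s brr functional_lin.
by apply: eq_bigr => i _; rewrite mxE mulrC.
Qed.


Lemma zaux2 (V : zmodType) (P Q X Y Z : V) :
  P - X - (Y - Z) - (Q - Y - (X - Z)) = P - Q.
Proof.
have e1 : P - X - (Y - Z) = P + -(X + (Y - Z)).
  by rewrite [- (X + _)]opprD addrA.
have e2 : Q - Y - (X - Z) = -(X + (Y - Z)) + Q.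
  by rewrite (addrCA X) [RHS]addrC [- (Y + _)]opprD addrA.
by rewrite e1 e2 addrKA.
Qed.

Lemma comm_shift (R : realType) n (A B : 'M[R]_n) a b :
  (A - a%:M) *m (B - b%:M) - (B - b%:M) *m (A - a%:M) = A *m B - B *m A.
Proof.
rewrite !mulmxBl !mulmxBr !mul_mx_scalar !mul_scalar_mx !scale_scalar_mx mulrC.
exact: zaux2.
Qed.

Lemma trB (R : realType) n (A B : 'M[R]_n) : \tr (A - B) = \tr A - \tr B.
Proof. exact: raddfB. Qed.

Lemma part2 (R : realType) (n : nat) (br : 'cV[R]_n -> 'cV[R]_n -> 'cV[R]_n) :
  lie_bracket br ->
  (forall nab : 'cV[R]_n -> 'cV[R]_n -> 'cV[R]_n,
     bilinear_map nab -> proj_flat br nab ->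
     exists (Psi : 'cV[R]_n -> 'M[R]_n) (f : 'rV[R]_n),
       [/\ lie_hom_sl br Psi,
           (forall u v : 'cV[R]_n, nab u v = conn_of Psi f u v) &
           (forall (Psi' : 'cV[R]_n -> 'M[R]_n) (f' : 'rV[R]_n),
              lie_hom_sl br Psi' ->
              (forall u v : 'cV[R]_n, nab u v = conn_of Psi' f' u v) ->
              (forall u : 'cV[R]_n, Psi' u = Psi u) /\ f' = f)]).
Proof.
move=> [[brl brr] _ _] nab [nabl nabr] [s [[sl sr santi] Hcurv]].
case: (posnP n) => [n0|npos].
  subst n; exists (fun _ => 0), 0; split.
  - split; first by move=> *; apply/matrixP => -[].
      by move=> u; rewrite /mxtrace big_ord0.
    by move=> *; apply/matrixP => -[].
  - by move=> *; apply/matrixP => -[].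
  - by move=> *; split; [move=> *; apply/matrixP => -[] | apply/matrixP => ? -[]].
pose L u := matof (nab u).
have LE : forall u w, L u *m w = nab u w by move=> u; apply: matofE.
have Llin : forall a u u', L (a *: u + u') = a *: L u + L u'.
  by move=> a u u'; apply/matrixP => i j; rewrite !mxE nabl !mxE.
pose T u := \tr (L u).
have Tlin : forall a u u', T (a *: u + u') = a * T u + T u'.
  by move=> a u u'; rewrite /T Llin mxtraceD mxtraceZ.
have nR : (n%:R : R) != 0 by rewrite pnatr_eq0 -lt0n.
pose f : 'rV[R]_n := \row_j (T (delta_mx j 0) / n%:R).
have fE : forall u, functional f u = T u / n%:R.
  move=> u; rewrite /functional mxE (lin_sumR Tlin u) mulr_suml.
  by apply: eq_bigr => j _; rewrite mxE mulrC mulrA.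
pose Psi u := L u - (functional f u)%:M.
have connE : forall u v, nab u v = conn_of Psi f u v.
  by move=> u v; rewrite /conn_of /Psi mulmxBl mul_scalar_mx subrK LE.
have trPsi : forall u, \tr (Psi u) = 0.
  by move=> u; rewrite /Psi trB mxtrace_scalar fE -[X in _ - X]mulr_natr divfK // subrr.
exists Psi, f; split => //.
- split => //.
  + move=> a u u'; rewrite /Psi Llin functional_lin raddfD /= -scale_scalar_mx.
    by rewrite scalerBr opprD addrACA.
  + move=> u v.
    have Hm : L v *m L u - L u *m L v + L (br u v) = (s u v)%:M.
      apply: mx_ext => w; rewrite mulmxDl mulmxBl -!mulmxA !LE mul_scalar_mx.
      exact: Hcurv.
    have Ht : T (br u v) = s u v *+ n.
      have := congr1 mxtrace Hm; rewrite mxtraceD trB mxtrace_mulC subrr add0r.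
      by rewrite mxtrace_scalar.
    have fs : functional f (br u v) = s u v.
      by rewrite fE Ht -[s u v *+ n]mulr_natr mulfK.
    rewrite comm_shift /Psi fs.
    have -> : L (br u v) = (s u v)%:M - (L v *m L u - L u *m L v).
      by rewrite -Hm addrC addKr.
    by rewrite addrC addKr opprB.
- move=> Psi' f' [_ trPsi' _] Hc.
  have Lu : forall u, L u = Psi' u + (functional f' u)%:M.
    move=> u; apply: mx_ext => w; rewrite LE Hc /conn_of mulmxDl mul_scalar_mx //.
  have ff : forall u, functional f' u = functional f u.
    move=> u; rewrite fE /T Lu mxtraceD trPsi' add0r mxtrace_scalar -[_ *+ n]mulr_natr mulfK //.
  split.
    by move=> u; rewrite /Psi Lu ff addrK.
  apply/matrixP => i j; rewrite ord1.
  have := ff (delta_mx j 0); rewrite /functional -!colE !mxE //.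
Qed.

Unset Implicit Arguments.

Theorem theorem7p2 (R : realType) (n : nat) (br : 'cV[R]_n -> 'cV[R]_n -> 'cV[R]_n) :
  lie_bracket br ->
  (* every pair (Psi, f) gives a projectively flat left-invariant connection,
     whose Ricci tensor is rho(u,v) = f([u,v]) *)
  (forall (Psi : 'cV[R]_n -> 'M[R]_n) (f : 'rV[R]_n),
     lie_hom_sl br Psi ->
     proj_flat br (conn_of Psi f) /\
     (forall u v : 'cV[R]_n, ricci br (conn_of Psi f) u v = functional f (br u v))) /\
  (* every projectively flat left-invariant connection arises from a unique pair *)
  (forall nab : 'cV[R]_n -> 'cV[R]_n -> 'cV[R]_n,
     bilinear_map nab -> proj_flat br nab ->
     exists (Psi : 'cV[R]_n -> 'M[R]_n) (f : 'rV[R]_n),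
       [/\ lie_hom_sl br Psi,
           (forall u v : 'cV[R]_n, nab u v = conn_of Psi f u v) &
           (forall (Psi' : 'cV[R]_n -> 'M[R]_n) (f' : 'rV[R]_n),
              lie_hom_sl br Psi' ->
              (forall u v : 'cV[R]_n, nab u v = conn_of Psi' f' u v) ->
              (forall u : 'cV[R]_n, Psi' u = Psi u) /\ f' = f)]).
Proof.
move=> Hbr; split; [exact: part1 | exact: part2].
Qed.
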